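(* For each environment $i\in\{1,\dots,N\}$ let $L_i>0$ be a constant such that $\|\mu^{\pi_1}_i-\mu^{\pi_2}_i\|_2\le L_i\|\pi_1-\pi_2\|_2$ for all $\pi_1,\pi_2\in\Pi$, and let $L=\max_{i}L_i$. Then for all $\pi_1,\pi_2\in\Pi$ and all $\beta\in\Delta_N$, $$|V_\beta(\pi_1)-V_\beta(\pi_2)|\le n_c\,L\,\sqrt{|\mathcal{S}||\mathcal{A}|}\,\|\pi_1-\pi_2\|_2 .$$
   Context: Let $\mathcal{S},\mathcal{A}$ be finite sets, $\gamma\in(0,1)$, $\rho$ a probability distribution on $\mathcal{S}$, and for $i=1,\dots,N$ let environment $i$ be the Markov decision process $(\mathcal{S},\mathcal{A},P^i,\gamma,\rho)$ with transition kernel $P^i$. $\Pi$ is the set of stationary policies $\pi:\mathcal{S}\to\Delta(\mathcal{A})$, with $\pi(s,a)$ the probability of $a$ at $s$, identified with vectors in $\mathbb{R}^{|\mathcal{S}||\mathcal{A}|}$. For $\pi\in\Pi$, $\mu^\pi_i(s,a)=\sum_{t\ge0}\gamma^t\mathbb{P}^{\pi,i}_\rho[s_t=s,a_t=a]$ is the discounted occupation measure, where $\mathbb{P}^{\pi,i}_\rho$ is the trajectory law with $s_0\sim\rho$, $a_t\sim\pi(s_t,\cdot)$, $s_{t+1}\sim P^i(\cdot\mid s_t,a_t)$. For each $i$ an expert policy $\pi^{E_i}\in\Pi$ is given. The cost basis matrix is $\Phi=[\phi_1,\dots,\phi_{n_c}]\in\mathbb{R}^{|\mathcal{S}||\mathcal{A}|\times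 n_c}$ with $\|\phi_j\|_\infty\le1$ for all $j$. $\Delta_N=\{\beta\in\mathbb{R}^N_{\ge0}:\sum_i\beta_i=1\}$. The performance function is $V_\beta(\pi)=\sum_{i=1}^N\beta_i\|\Phi^\top\mu^\pi_i-\Phi^\top\mu^{\pi^{E_i}}_i\|_1$. *)

(* Defs.v *)
From HB Require Import structures.
From mathcomp Require Import all_boot all_order all_algebra.
From mathcomp Require Import all_classical all_reals all_analysis.
Set Implicit Arguments. Unset Strict Implicit. Unset Printing Implicit Defensive.
Import Order.TTheory GRing.Theory Num.Theory.
Import numFieldNormedType.Exports.
Local Open Scope ring_scope.

Section Defs.
Variables (R : realType) (S A : finType).

Definition is_distr (rho : S -> R) : Prop :=
  (forall s, 0 <= rho s) /\ \sum_s rho s = 1.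

Definition is_kernel (P : S -> A -> S -> R) : Prop :=
  forall s a, (forall s', 0 <= P s a s') /\ \sum_s' P s a s' = 1.

Definition is_policy (pi : S -> A -> R) : Prop :=
  forall s, (forall a, 0 <= pi s a) /\ \sum_a pi s a = 1.

(* Marginal law of s_t under P^{pi}_rho (s_0 ~ rho, a_t ~ pi(s_t,.),
   s_{t+1} ~ P(.|s_t,a_t)). *)
Fixpoint state_dist (P : S -> A -> S -> R) (rho : S -> R) (pi : S -> A -> R)
    (t : nat) (s : S) : R :=
  match t with
  | 0 => rho s
  | t'.+1 => \sum_s0 \sum_a0 state_dist P rho pi t' s0 * pi s0 a0 * P s0 a0 s
  end.

Definition traj_prob (P : S -> A -> S -> R) (rho : S -> R) (pi : S -> A -> R)
    (t : nat) (s : S) (a : A) : R :=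
  state_dist P rho pi t s * pi s a.

Definition occ (gamma : R) (P : S -> A -> S -> R) (rho : S -> R)
    (pi : S -> A -> R) (s : S) (a : A) : R :=
  limn (series (fun t => gamma ^+ t * traj_prob P rho pi t s a)).

Definition norm2 (f : S -> A -> R) : R :=
  Num.sqrt (\sum_s \sum_a f s a ^+ 2).

(* (Phi^T mu)_j for Phi = [phi_1 ... phi_nc]. *)
Definition featexp (nc : nat) (Phi : 'I_nc -> S -> A -> R) (mu : S -> A -> R)
    (j : 'I_nc) : R :=
  \sum_s \sum_a Phi j s a * mu s a.

Definition Vbeta (N nc : nat) (gamma : R) (P : 'I_N -> S -> A -> S -> R)
    (rho : S -> R) (Phi : 'I_nc -> S -> A -> R) (piE : 'I_N -> S -> A -> R)
    (beta : 'I_N -> R) (pi : S -> A -> R) : R :=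
  \sum_i beta i * \sum_j
     `|featexp Phi (occ gamma (P i) rho pi) j
       - featexp Phi (occ gamma (P i) rho (piE i)) j|.

End Defs.

(* Main.v *)
Require Import Defs.
From HB Require Import structures.
From mathcomp Require Import all_boot all_order all_algebra.
From mathcomp Require Import all_classical all_reals all_analysis.
Import Order.TTheory GRing.Theory Num.Theory.
Local Open Scope ring_scope.

From mathcomp Require Import ring lra.
Lemma cs_fin (R : realType) (T : finType) (g : T -> R) :
  (\sum_t `|g t|) ^+ 2 <= #|T|%:R * \sum_t g t ^+ 2.
Proof.
have E1 : (\sum_t `|g t|) ^+ 2 = \sum_t \sum_u `|g t| * `|g u|.
  by rewrite expr2 mulr_suml; apply: eq_bigr => t _; rewrite mulr_sumr.
have E2 : \sum_t \sum_u (g t ^+ 2 + g u ^+ 2) = (#|T|%:R * \sum_t g t ^+ 2) *+ 2.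
  under eq_bigr => t _ do rewrite big_split /= sumr_const.
  rewrite big_split /= sumr_const -sumrMnl mulr_natl.
  under eq_bigr => t _ do rewrite -mulr_natr.
  by rewrite -mulr_suml -(mulr_natr _ #|T|) mulr2n mul1r mulr_natr.
rewrite E1.
have : \sum_t \sum_u `|g t| * `|g u| *+ 2 <= \sum_t \sum_u (g t ^+ 2 + g u ^+ 2).
  apply: ler_sum => t _; apply: ler_sum => u _.
  have := sqr_ge0 (`|g t| - `|g u|).
  rewrite sqrrB !real_normK ?num_real //. lra.
rewrite E2.
under eq_bigr => t _ do rewrite sumrMnl.
rewrite sumrMnl. rewrite !mulr2n. lra.
Qed.

Lemma l1_norm2 (R : realType) (S A : finType) (f : S -> A -> R) :
  \sum_s \sum_a `|f s a| <= Num.sqrt (#|S| * #|A|)%:R * norm2 f.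
Proof.
rewrite /norm2 pair_bigA /= [X in _ <= _ * Num.sqrt X]pair_bigA /=.
rewrite -sqrtrM ?ler0n // -card_prod.
rewrite -[X in X <= _]ger0_norm ?sumr_ge0 // -sqrtr_sqr.
apply: ler_wsqrtr.
exact: cs_fin.
Qed.

Theorem lemma3 (R : realType) (S A : finType) (N nc : nat) (gamma : R)
  (rho : S -> R) (P : 'I_N -> S -> A -> S -> R) (piE : 'I_N -> S -> A -> R)
  (Phi : 'I_nc -> S -> A -> R) (Lc : 'I_N -> R) :
  0 < gamma < 1 ->
  is_distr rho ->
  (forall i, is_kernel (P i)) ->
  (forall i, is_policy (piE i)) ->
  (forall j s a, `|Phi j s a| <= 1) ->
  (forall i, 0 < Lc i) ->
  (forall i (pi1 pi2 : S -> A -> R), is_policy pi1 -> is_policy pi2 ->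
     norm2 (fun s a => occ gamma (P i) rho pi1 s a - occ gamma (P i) rho pi2 s a)
       <= Lc i * norm2 (fun s a => pi1 s a - pi2 s a)) ->
  let L := \big[Order.max/0]_(i < N) Lc i in
  forall (pi1 pi2 : S -> A -> R) (beta : 'I_N -> R),
    is_policy pi1 -> is_policy pi2 ->
    (forall i, 0 <= beta i) -> \sum_i beta i = 1 ->
    `|Vbeta gamma P rho Phi piE beta pi1 - Vbeta gamma P rho Phi piE beta pi2|
      <= nc%:R * L * Num.sqrt (#|S| * #|A|)%:R * norm2 (fun s a => pi1 s a - pi2 s a).
Proof.
move=> _ _ _ _ HPhi _ HL L pi1 pi2 beta Hp1 Hp2 Hb Hsum.
set n2 := norm2 _.
set sq := Num.sqrt _.
have sq0 : 0 <= sq by apply: sqrtr_ge0.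
have n20 : 0 <= n2 by apply: sqrtr_ge0.
have Lge : forall i, Lc i <= L by move=> i; exact: le_bigmax.
have key : forall i j,
   `|featexp Phi (occ gamma (P i) rho pi1) j - featexp Phi (occ gamma (P i) rho pi2) j|
     <= sq * (L * n2).
  move=> i j.
  set d := fun s a => occ gamma (P i) rho pi1 s a - occ gamma (P i) rho pi2 s a.
  have -> : featexp Phi (occ gamma (P i) rho pi1) j - featexp Phi (occ gamma (P i) rho pi2) j
     = \sum_s \sum_a Phi j s a * d s a.
    rewrite /featexp -sumrB; apply: eq_bigr => s _.
    rewrite -sumrB; apply: eq_bigr => a _; by rewrite /d mulrBr.
  apply: le_trans (ler_norm_sum _ _ _) _.
  apply: (@le_trans _ _ (\sum_s \sum_a `|d s a|)).
    apply: ler_sum => s _; apply: le_trans (ler_norm_sum _ _ _) _.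
    apply: ler_sum => a _; rewrite normrM; exact: ler_piMl.
  apply: le_trans (@l1_norm2 _ _ _ d) _.
  apply: ler_wpM2l => //.
  apply: le_trans (HL i pi1 pi2 Hp1 Hp2) _.
  by apply: ler_wpM2r.
rewrite /Vbeta -sumrB.
apply: le_trans (ler_norm_sum _ _ _) _.
apply: (@le_trans _ _ (\sum_i beta i * (nc%:R * L * sq * n2))).
  apply: ler_sum => i _.
  rewrite -mulrBr normrM ger0_norm //; apply: ler_wpM2l => //.
  rewrite -sumrB; apply: le_trans (ler_norm_sum _ _ _) _.
  apply: (@le_trans _ _ (\sum_(j < nc) sq * (L * n2))).
    apply: ler_sum => j _; apply: le_trans (ler_dist_dist _ _) _.
    by rewrite opprB addrA subrK; apply: key.
  by rewrite sumr_const card_ord -(mulr_natr (sq * (L * n2)) nc) mulrC !mulrA -[nc%:R * sq * L]mulrA [sq * L]mulrC mulrA.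
by rewrite -mulr_suml Hsum mul1r.
Qed.
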